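(* For all $(y_1,a_1),(y_2,a_2)\in(\mathcal{A}\sqcup\mathcal{B})\times\mathcal{A}$ and $\varepsilon_1,\varepsilon_2\in\{\pm1\}$, either $(y_1,a_1)=(y_2,a_2)$ and $\varepsilon_1=-\varepsilon_2$, or fewer than $\frac14 D_{\mathcal{A}}$ letters of $v(y_j,a_j)$ ($j=1,2$) are cancelled in the free reduction of the product $v(y_1,a_1)^{\varepsilon_1}v(y_2,a_2)^{\varepsilon_2}$. In particular, $S_{\mathcal{A}}=\{v(y,a):(y,a)\in(\mathcal{A}\sqcup\mathcal{B})\times\mathcal{A}\}$ is a basis of a free subgroup of $F(\mathcal{B})$.
   Context: Let $\mathcal{A}$ be a finite non-empty alphabet and $\mathcal{B}=\{b_1,b_2\}$ (disjoint from $\mathcal{A}$); $F(\mathcal{B})$ is the free group on $\mathcal{B}$. Let $D_{\mathcal{A}}=4|\mathcal{A}|(|\mathcal{A}|+2)$ and fix a bijection $\eta_{\mathcal{A}}:(\mathcal{A}\sqcup\mathcal{B})\times\mathcal{A}\to\{1,\dots,D_{\mathcal{A}}/4\}$. For $y\in\mathcal{A}\sqcup\mathcal{B}$ and $a\in\mathcal{A}$ set $k=\eta_{\mathcal{A}}(y,a)$ and $v(y,a)=b_1^k(b_2b_1)^{D_{\mathcal{A}}-2k}b_2^k\in F(\mathcal{B})$. *)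

(* Defs.v *)
From mathcomp Require Import all_boot.
Set Implicit Arguments. Unset Strict Implicit. Unset Printing Implicit Defensive.

Definition Bgen := 'I_2.
Definition b1 : Bgen := @Ordinal 2 0 isT.
Definition b2 : Bgen := @Ordinal 2 1 isT.

(* A letter of F(B): a generator together with an "inverse" flag
   (false = b, true = b^-1).  A word is a sequence of letters. *)
Definition letter := (Bgen * bool)%type.
Definition word := seq letter.

Definition linv (x : letter) : letter := (x.1, ~~ x.2).
Definition inv_word (w : word) : word := rev (map linv w).

Definition reduce (w : word) : word :=
  foldr (fun x acc => match acc with
                      | y :: r => if y == linv x then r else x :: acc
                      | [::] => [:: x]
                      end) [::] w.

(* w^eps with eps in {+1,-1}; eps encoded as a bool, true meaning -1. *)
Definition wpow (w : word) (eps : bool) : word := if eps then inv_word w else w.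

(* Number of letters cancelled from each factor in the free reduction of
   the product u w of two freely reduced words: the largest n such that the
   last n letters of u are the inverse of the first n letters of w. *)
Definition cancelled (u w : word) : nat :=
  \max_(n < (minn (size u) (size w)).+1 | drop (size u - n) u == inv_word (take n w)) n.

Definition DA (A : finType) : nat := 4 * #|A| * (#|A| + 2).

Definition idx (A : finType) : finType := ((A + Bgen)%type * A)%type.

Definition vword (A : finType) (eta : idx A -> nat) (p : idx A) : word :=
  let k := eta p in
  nseq k (b1, false) ++ flatten (nseq (DA A - 2 * k) [:: (b2, false); (b1, false)])
  ++ nseq k (b2, false).

Definition eta_bij (A : finType) (eta : idx A -> nat) : Prop :=
  [/\ forall p, 1 <= eta p <= DA A %/ 4,
      injective eta &
      forall k, 1 <= k <= DA A %/ 4 -> exists p, eta p = k].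

Definition idx_reduced (A : finType) (s : seq (idx A * bool)) : bool :=
  sorted (fun x y => ~~ ((x.1 == y.1) && (x.2 != y.2))) s.

(* Main.v *)
Require Import Defs.
From mathcomp Require Import all_boot.
From mathcomp Require Import zify.
Set Implicit Arguments. Unset Strict Implicit.

Definition step (x : letter) (acc : word) : word :=
  match acc with
  | y :: r => if y == linv x then r else x :: acc
  | [::] => [:: x]
  end.

Lemma reduce_cat x y : reduce (x ++ y) = foldr step (reduce y) x.
Proof. by rewrite /reduce foldr_cat. Qed.

Definition flags (e : bool) (w : word) := all (fun l : letter => l.2 == e) w.

Lemma linvK (a : letter) : linv (linv a) = a.
Proof. by case: a => ? []. Qed.

Lemma inv_wordK w : inv_word (inv_word w) = w.
Proof.
rewrite /inv_word map_rev revK -map_comp.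
by rewrite (eq_map (g := id)) ?map_id // => a /=; rewrite linvK.
Qed.

Lemma size_inv_word w : size (inv_word w) = size w.
Proof. by rewrite /inv_word size_rev size_map. Qed.

Lemma drop_inv j w : drop j (inv_word w) = inv_word (take (size w - j) w).
Proof. by rewrite /inv_word drop_rev size_map map_take. Qed.

Lemma take_inv j w : take j (inv_word w) = inv_word (drop (size w - j) w).
Proof. by rewrite /inv_word take_rev size_map map_drop. Qed.

Lemma inv_rcons l c : inv_word (rcons l c) = linv c :: inv_word l.
Proof. by rewrite /inv_word map_rcons rev_rcons. Qed.

Lemma take_S n (z : word) c r : drop n z = c :: r -> take n.+1 z = rcons (take n z) c.
Proof.
elim: z n => [|y z IH] [|n] //=.
- by move=> [->]; rewrite take0.
- by move=> /IH ->.
Qed.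

Lemma drop_S n (z : word) c r : drop n z = c :: r -> drop n.+1 z = r.
Proof.
elim: z n => [|y z IH] [|n] //=.
- by move=> [_ ->]; rewrite drop0.
- by move=> /IH.
Qed.

Lemma fold_red e x z : flags e x -> exists t,
  [/\ t <= minn (size x) (size z), drop (size x - t) x = inv_word (take t z)
    & foldr step z x = take (size x - t) x ++ drop t z].
Proof.
elim: x => [|a x IH].
  by move=> _; exists 0; rewrite drop0 take0.
move=> /andP [/eqP Ha Hx]; have [t [Ht Hd Hf]] := IH Hx.
have -> : foldr step z (a :: x) = step a (foldr step z x) by [].
rewrite Hf.
have [Hlt|Hge] := ltnP t (size x).
  case: x Hx IH Ht Hd Hf Hlt => [|b x] //= /andP [/eqP Hb _] _ Ht Hd Hf Hlt.
  have E1 : (size x).+1 - t = (size x - t).+1 by lia.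
  have E2 : (size x).+2 - t = (size x - t).+2 by lia.
  rewrite E1 in Hd Hf *.
  have Hba : (b == linv a) = false.
    apply/negbTE/eqP => Hba; move: Hb; rewrite Hba /= Ha; by case: e {Ha Hba}.
  exists t; rewrite E2; split; [lia | by [] | by rewrite /= /step Hba].
have Et : t = size x by lia.
rewrite Et subnn take0 /= in Hd *; rewrite drop0 in Hd.
case Ed: (drop (size x) z) => [|c r].
  exists (size x); rewrite subSnn /= drop0 take0 Ed; split => //; lia.
have Hsz : size x < size z.
  have := size_drop (size x) z; rewrite Ed /=; lia.
case: (eqVneq c (linv a)) => Hc.
  exists (size x).+1; rewrite subnn drop0 take0 /=; split.
  - lia.
  - by rewrite (take_S Ed) inv_rcons Hc linvK -Hd.
  - by rewrite /step Hc eqxx (drop_S Ed).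
exists (size x); rewrite subSnn /= drop0 take0; split => //; first lia.
by rewrite Ed /step (negbTE Hc).
Qed.

Lemma cancelled_ge u w t : t <= minn (size u) (size w) ->
  drop (size u - t) u = inv_word (take t w) -> t <= cancelled u w.
Proof.
move=> Ht Hc; rewrite /cancelled.
have Ht' : t < (minn (size u) (size w)).+1 by [].
exact: (@leq_bigmax_cond _ _ (fun n : 'I__ => nat_of_ord n) (Ordinal Ht') (introT eqP Hc)).
Qed.

Lemma cancelled_le u w B :
  (forall t, t <= minn (size u) (size w) ->
     drop (size u - t) u = inv_word (take t w) -> t <= B) ->
  cancelled u w <= B.
Proof.
move=> H; rewrite /cancelled; apply/bigmax_leqP => i /eqP Hc.
by apply: H => //; rewrite -ltnS; exact: ltn_ord.
Qed.

Definition vk (D k : nat) : word :=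
  nseq k (b1, false) ++ flatten (nseq (D - 2 * k) [:: (b2, false); (b1, false)])
  ++ nseq k (b2, false).

Lemma flatten_nseqS m (l : word) : flatten (nseq m.+1 l) = flatten (nseq m l) ++ l.
Proof.
elim: m => [|m IH]; first by rewrite /= cats0.
have -> : flatten (nseq m.+2 l) = l ++ flatten (nseq m.+1 l) by [].
by rewrite {1}IH catA.
Qed.

Lemma size_flatten_nseq m (l : word) : size (flatten (nseq m l)) = m * size l.
Proof. by elim: m => [|m IH] //=; rewrite size_cat IH mulSn. Qed.

Lemma size_vk D k : size (vk D k) = k + (D - 2 * k) * 2 + k.
Proof. by rewrite /vk !size_cat !size_nseq size_flatten_nseq addnA. Qed.

Lemma flags_vk D k : flags false (vk D k).
Proof.
rewrite /flags !all_cat !all_nseq /= !orbT /=.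
by elim: (D - 2 * k) => [|m IH] //=.
Qed.

Lemma flags_inv e w : flags e w -> flags (~~ e) (inv_word w).
Proof.
rewrite /flags /inv_word all_rev all_map => H.
by apply: sub_all H => l /eqP Hl /=; rewrite Hl.
Qed.

Lemma flags_wpow D k e : flags e (wpow (vk D k) e).
Proof. by case: e => /=; [apply: (flags_inv (e := false)) | ]; apply: flags_vk. Qed.

Lemma size_wpow w e : size (wpow w e) = size w.
Proof. by case: e => //=; rewrite size_inv_word. Qed.

Lemma flags_take e n w : flags e w -> flags e (take n w).
Proof. by rewrite /flags -{1}(cat_take_drop n w) all_cat => /andP[]. Qed.

Lemma flags_drop e n w : flags e w -> flags e (drop n w).
Proof. by rewrite /flags -{1}(cat_take_drop n w) all_cat => /andP[]. Qed.

Lemma same_sign_zero e u w t : flags e u -> flags e w ->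
  t <= minn (size u) (size w) -> drop (size u - t) u = inv_word (take t w) -> t = 0.
Proof.
move=> Hu Hw Ht Hc.
have H1 := flags_drop (size u - t) Hu.
have H2 := flags_inv (flags_take t Hw).
have Hs : size (drop (size u - t) u) = t by rewrite size_drop; lia.
move: H1 Hs; rewrite Hc; move: H2.
case: (inv_word (take t w)) => [|c l] //=.
by move=> /andP[/eqP -> _] /andP[]; move: Hu Hw => _ _; case: e.
Qed.

Lemma nth_vk_mid D k x0 : 2 * k < D -> nth x0 (vk D k) k = (b2, false).
Proof.
move=> H; rewrite /vk; have [m ->] : exists m, D - 2 * k = m.+1 by exists (D - 2 * k).-1; lia.
by rewrite nth_cat size_nseq ltnn subnn.
Qed.

Lemma nth_vk_left D k x0 i : i < k -> nth x0 (vk D k) i = (b1, false).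
Proof. by move=> H; rewrite /vk nth_cat size_nseq H nth_nseq H. Qed.

Lemma nth_rvk_mid D k x0 : 2 * k < D -> nth x0 (rev (vk D k)) k = (b1, false).
Proof.
move=> H; rewrite /vk; have [m ->] : exists m, D - 2 * k = m.+1 by exists (D - 2 * k).-1; lia.
rewrite flatten_nseqS !rev_cat rev_nseq.
by rewrite -catA nth_cat size_nseq ltnn subnn.
Qed.

Lemma nth_rvk_left D k x0 i : i < k -> nth x0 (rev (vk D k)) i = (b2, false).
Proof. by move=> H; rewrite /vk !rev_cat rev_nseq -catA nth_cat size_nseq H nth_nseq H. Qed.

Lemma pref_diff D k1 k2 t : 2 * k1 < D -> 2 * k2 < D -> k1 != k2 ->
  minn k1 k2 < t -> take t (vk D k1) <> take t (vk D k2).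
Proof.
move=> H1 H2 Hk Ht Heq.
case: (ltngtP k1 k2) Hk => // Hlt _.
  have := congr1 (fun s => nth (b1, false) s k1) Heq; rewrite /= !nth_take; try lia.
  by rewrite nth_vk_mid // nth_vk_left.
have := congr1 (fun s => nth (b1, false) s k2) Heq; rewrite /= !nth_take; try lia.
by rewrite nth_vk_mid // nth_vk_left.
Qed.

Lemma suf_diff D k1 k2 t : 2 * k1 < D -> 2 * k2 < D -> k1 != k2 ->
  minn k1 k2 < t -> take t (rev (vk D k1)) <> take t (rev (vk D k2)).
Proof.
move=> H1 H2 Hk Ht Heq.
case: (ltngtP k1 k2) Hk => // Hlt _.
  have := congr1 (fun s => nth (b1, false) s k1) Heq; rewrite /= !nth_take; try lia.
  by rewrite nth_rvk_mid // nth_rvk_left.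
have := congr1 (fun s => nth (b1, false) s k2) Heq; rewrite /= !nth_take; try lia.
by rewrite nth_rvk_mid // nth_rvk_left.
Qed.

Lemma part1_core D k1 k2 e1 e2 : 0 < D -> 4 * k1 <= D -> 4 * k2 <= D ->
  (k1 = k2 /\ e1 != e2) \/
  4 * cancelled (wpow (vk D k1) e1) (wpow (vk D k2) e2) < D.
Proof.
move=> HD H1 H2.
have H1' : 2 * k1 < D by lia.
have H2' : 2 * k2 < D by lia.
case: (eqVneq e1 e2) => He.
  right; subst e2.
  suff : cancelled (wpow (vk D k1) e1) (wpow (vk D k2) e1) <= 0 by lia.
  apply: cancelled_le => t Ht Hc.
  by rewrite (same_sign_zero (flags_wpow D k1 e1) (flags_wpow D k2 e1) Ht Hc).
case: (eqVneq k1 k2) => Hk; first by left.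
right.
suff : cancelled (wpow (vk D k1) e1) (wpow (vk D k2) e2) <= minn k1 k2 by lia.
apply: cancelled_le => t Ht Hc.
rewrite leqNgt; apply/negP => Hlt.
move: He Ht Hc; case: e1; case: e2 => //= _ Ht Hc.
  rewrite drop_inv size_inv_word in Hc.
  rewrite size_inv_word in Ht.
  have E : size (vk D k1) - (size (vk D k1) - t) = t by lia.
  rewrite E in Hc.
  apply: (pref_diff H1' H2' Hk Hlt).
  by rewrite -(inv_wordK (take t (vk D k1))) Hc inv_wordK.
rewrite take_inv inv_wordK in Hc.
apply: (suf_diff H1' H2' Hk Hlt).
by rewrite !take_rev Hc.
Qed.

Lemma part2 (T : eqType) (U : T -> bool -> word) D :
  0 < D -> (forall q e, flags e (U q e)) -> (forall q e, D <= size (U q e)) ->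
  (forall p1 p2 e1 e2, (p1 = p2 /\ e1 != e2) \/ 4 * cancelled (U p1 e1) (U p2 e2) < D) ->
  forall s : seq (T * bool), s != [::] ->
  sorted (fun x y => ~~ ((x.1 == y.1) && (x.2 != y.2))) s ->
  reduce (flatten [seq U q.1 q.2 | q <- s]) != [::].
Proof.
move=> HD Hf Hs Hc.
have key : forall s q, path (fun x y => ~~ ((x.1 == y.1) && (x.2 != y.2))) q s ->
  exists m Y, [/\ reduce (flatten [seq U q.1 q.2 | q <- q :: s]) = take m (U q.1 q.2) ++ Y,
                 D <= 4 * m & m <= size (U q.1 q.2)].
  elim => [|q' s IH] q /=.
    move=> _; have [t [Ht _ Hr]] := fold_red [::] (Hf q.1 q.2).
    have Et : t = 0 by move: Ht; rewrite /= minn0; lia.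
    exists (size (U q.1 q.2)), [::]; rewrite reduce_cat Hr Et subn0 drop0.
    split => //; have := Hs q.1 q.2; lia.
  move=> /andP [Hqq Hp]; have [m [Y [HR Hm1 Hm2]]] := IH q' Hp.
  move: HR => /= HR; rewrite reduce_cat HR.
  have [t [Ht Hd Hr]] := fold_red (take m (U q'.1 q'.2) ++ Y) (Hf q.1 q.2).
  rewrite Hr.
  have Hc' : 4 * cancelled (U q.1 q.2) (U q'.1 q'.2) < D.
    case: (Hc q.1 q'.1 q.2 q'.2) => // [[E1 E2]].
    by move: Hqq; rewrite E1 eqxx E2.
  have Hsz : size (take m (U q'.1 q'.2) ++ Y) = m + size Y by rewrite size_cat size_takel.
  have Ht' : minn t m <= cancelled (U q.1 q.2) (U q'.1 q'.2).
    apply: cancelled_ge; first by rewrite Hsz in Ht; lia.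
    have -> : size (U q.1 q.2) - minn t m = (t - minn t m) + (size (U q.1 q.2) - t).
      rewrite Hsz in Ht; lia.
    rewrite -drop_drop Hd drop_inv size_takel; last by rewrite Hsz in Ht; lia.
    have -> : t - (t - minn t m) = minn t m by lia.
    rewrite take_takel; last lia.
    by rewrite takel_cat ?size_takel // ?take_takel //; lia.
  exists (size (U q.1 q.2) - t), (drop t (take m (U q'.1 q'.2) ++ Y)); split => //.
  - have := Hs q.1 q.2; rewrite Hsz in Ht; lia.
  - exact: leq_subr.
case => [//|q s] _ Hsort.
have [m [Y [HR Hm1 Hm2]]] := key s q Hsort.
rewrite HR; apply/eqP => E.
have := size_cat (take m (U q.1 q.2)) Y; rewrite E size_takel //=; lia.
Qed.

Theorem lemma5p1 (A : finType) (hA : 0 < #|A|) (eta : idx A -> nat)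
    (heta : eta_bij eta) :
  (forall (p1 p2 : idx A) (e1 e2 : bool),
      (p1 = p2 /\ e1 != e2) \/
      4 * cancelled (wpow (vword eta p1) e1) (wpow (vword eta p2) e2) < DA A)
  /\
  (forall s : seq (idx A * bool), s != [::] -> idx_reduced s ->
      reduce (flatten [seq wpow (vword eta q.1) q.2 | q <- s]) != [::]).
Proof.
have HD : 0 < DA A by rewrite /DA !muln_gt0 hA addn_gt0 orbT.
case: heta => Hrange Hinj _.
have Hk : forall p, 4 * eta p <= DA A.
  move=> p; have /andP[_ H] := Hrange p.
  by move: H; rewrite leq_divRL // mulnC.
have P1 : forall (p1 p2 : idx A) (e1 e2 : bool),
      (p1 = p2 /\ e1 != e2) \/
      4 * cancelled (wpow (vword eta p1) e1) (wpow (vword eta p2) e2) < DA A.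
  move=> p1 p2 e1 e2.
  case: (part1_core e1 e2 HD (Hk p1) (Hk p2)) => [[E He]|H].
    by left; split => //; exact: Hinj.
  by right; exact: H.
split => // s Hs Hr.
apply: (part2 (U := fun p e => wpow (vword eta p) e) HD) => //.
- move=> q e; exact: flags_wpow.
- move=> q e; rewrite size_wpow.
  change (vword eta q) with (vk (DA A) (eta q)); rewrite size_vk.
  have := Hk q; lia.
Qed.
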